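(* Let $\Psi_n$ be a real $K\times K$ matrix and $c\in(0,1)$. For every integer $s$ with $1\le s\le K/2$ and every $1<p\le2$, $$\kappa_{p,J}\ge C(p)\,s^{-1/p}\,\kappa_{\rm RE}(2s)\qquad\text{for all }J\subseteq\{1,\dots,K\}\text{ with }|J|\le s,$$ where $C(p)=2^{-1/p-1/2}(1-c)\Big(1+\frac{1+c}{1-c}(p-1)^{-1/p}\Big)^{-1}$.
   Context: $\Delta_J$ zeroes coordinates outside $J$, $J^c$ complement. $C_J=\{\Delta\in\mathbb R^K:|\Delta_{J^c}|_1\le\frac{1+c}{1-c}|\Delta_J|_1\}$; $\kappa_{p,J}=\inf\{|\Psi_n\Delta|_\infty:\Delta\in C_J,|\Delta|_p=1\}$. $\kappa_{{\rm RE},J}=\inf_{\Delta\in C_J\setminus\{0\}}\frac{|\Delta^T\Psi_n\Delta|}{|\Delta_J|_2^2}$ (ratio with zero denominator is $+\infty$) and $\kappa_{\rm RE}(m)=\min_{|J|\le m}\kappa_{{\rm RE},J}$. *)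

(* Defs.v *)
From Stdlib Require Import Reals Lra.
Open Scope R_scope.

(* Conventions: K is the dimension; indices are 0..K-1 (the paper's 1..K shifted).
   Vectors in R^K are functions nat -> R (entries at indices >= K are ignored);
   a K x K matrix is a function nat -> nat -> R (entries outside range ignored);
   a subset J of {0..K-1} is a boolean predicate J : nat -> bool (only i < K matter). *)

Fixpoint rsum (n : nat) (f : nat -> R) : R :=
  match n with O => 0 | S m => rsum m f + f m end.

Fixpoint card (n : nat) (J : nat -> bool) : nat :=
  match n with O => O | S m => (card m J + (if J m then 1 else 0))%nat end.

(* x^y for x >= 0 (with 0^y = 0), y > 0 *)
Definition rpow (x y : R) : R := if Rlt_dec 0 x then Rpower x y else 0.

Definition norm1 (K : nat) (x : nat -> R) : R := rsum K (fun i => Rabs (x i)).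
Definition normp (K : nat) (p : R) (x : nat -> R) : R :=
  rpow (rsum K (fun i => rpow (Rabs (x i)) p)) (1 / p).
Fixpoint norminf (n : nat) (x : nat -> R) : R :=
  match n with O => 0 | S m => Rmax (norminf m x) (Rabs (x m)) end.
Definition norm2sq (K : nat) (x : nat -> R) : R := rsum K (fun i => x i * x i).

Definition restr (J : nat -> bool) (x : nat -> R) : nat -> R :=
  fun i => if J i then x i else 0.
Definition compl (J : nat -> bool) : nat -> bool := fun i => negb (J i).

Definition mulmv (K : nat) (Psi : nat -> nat -> R) (x : nat -> R) : nat -> R :=
  fun i => rsum K (fun j => Psi i j * x j).
Definition quad (K : nat) (Psi : nat -> nat -> R) (x : nat -> R) : R :=
  rsum K (fun i => x i * mulmv K Psi x i).

Definition inCone (K : nat) (c : R) (J : nat -> bool) (x : nat -> R) : Prop :=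
  norm1 K (restr (compl J) x) <= (1 + c) / (1 - c) * norm1 K (restr J x).

Definition nonzero (K : nat) (x : nat -> R) : Prop := exists i, (i < K)%nat /\ x i <> 0.

Definition is_inf (S : R -> Prop) (m : R) : Prop :=
  (forall x, S x -> m <= x) /\ (forall b, (forall x, S x -> b <= x) -> b <= m).

Definition kappa_p_set (K : nat) (Psi : nat -> nat -> R) (c p : R) (J : nat -> bool)
  : R -> Prop :=
  fun v => exists x, inCone K c J x /\ normp K p x = 1 /\ v = norminf K (mulmv K Psi x).

(* the set of finite values of the ratio defining kappa_{RE,J}
   (ratios with zero denominator are +infinity and do not affect the infimum) *)
Definition kappa_RE_J_set (K : nat) (Psi : nat -> nat -> R) (c : R) (J : nat -> bool)
  : R -> Prop :=
  fun v => exists x, inCone K c J x /\ nonzero K x /\ norm2sq K (restr J x) <> 0 /\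
    v = Rabs (quad K Psi x) / norm2sq K (restr J x).

(* k = kappa_RE(m) = min_{|J| <= m} kappa_{RE,J}  (the minimum is attained at a J0
   with finite kappa_{RE,J0} = k, and k is below every finite kappa_{RE,J}) *)
Definition is_kappa_RE (K : nat) (Psi : nat -> nat -> R) (c : R) (m : nat) (k : R) : Prop :=
  (exists J0, (card K J0 <= m)%nat /\ is_inf (kappa_RE_J_set K Psi c J0) k) /\
  (forall J k', (card K J <= m)%nat -> is_inf (kappa_RE_J_set K Psi c J) k' -> k <= k').

Definition Cconst (c p : R) : R :=
  Rpower 2 (- (1 / p) - 1 / 2) * (1 - c) *
  / (1 + (1 + c) / (1 - c) * Rpower (p - 1) (- (1 / p))).

(* Main.v *)
Require Import Defs.
From Stdlib Require Import Reals Lra Lia Psatz.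
Open Scope R_scope.

Lemma rsum_ext n f g : (forall i, (i < n)%nat -> f i = g i) -> rsum n f = rsum n g.
Proof. induction n; simpl; intros H; auto. rewrite IHn by (intros; apply H; lia). rewrite H by lia; auto. Qed.

Lemma rsum_le n f g : (forall i, (i < n)%nat -> f i <= g i) -> rsum n f <= rsum n g.
Proof. induction n; simpl; intros H; [lra|]. assert (H1:=H n ltac:(lia)). assert (rsum n f <= rsum n g) by (apply IHn; intros; apply H; lia). lra. Qed.

Lemma rsum_plus n f g : rsum n (fun i => f i + g i) = rsum n f + rsum n g.
Proof. induction n; simpl; [lra|]. rewrite IHn; ring. Qed.

Lemma rsum_scal n k f : rsum n (fun i => k * f i) = k * rsum n f.
Proof. induction n; simpl; [ring|]. rewrite IHn; ring. Qed.

Lemma rsum_nonneg n f : (forall i, (i < n)%nat -> 0 <= f i) -> 0 <= rsum n f.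
Proof. intros H. apply Rle_trans with (rsum n (fun _ : nat => 0)). clear H; induction n; simpl; lra. apply rsum_le; auto. Qed.

Lemma rsum_term n f i : (forall j, (j < n)%nat -> 0 <= f j) -> (i < n)%nat -> f i <= rsum n f.
Proof. induction n; simpl; intros H Hi; [lia|]. destruct (Nat.eq_dec i n).
 subst. assert (0 <= rsum n f) by (apply rsum_nonneg; intros; apply H; lia). lra.
 assert (f i <= rsum n f) by (apply IHn; [intros; apply H; lia| lia]). assert (0 <= f n) by (apply H; lia). lra. Qed.

Lemma rsum_abs n f : Rabs (rsum n f) <= rsum n (fun i => Rabs (f i)).
Proof. induction n; simpl. rewrite Rabs_R0; lra. eapply Rle_trans. apply Rabs_triang. lra. Qed.

Lemma rsum_card n (J : nat -> bool) : rsum n (fun i => if J i then 1 else 0) = INR (card n J).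
Proof. induction n; simpl; [auto|]. rewrite IHn, plus_INR. destruct (J n); simpl; lra. Qed.

Lemma card_orb n (J T : nat -> bool) : (card n (fun i => orb (J i) (T i)) <= card n J + card n T)%nat.
Proof. induction n; simpl; [lia|]. destruct (J n), (T n); simpl; lia. Qed.

Lemma card_le_n n (J : nat -> bool) : (card n J <= n)%nat.
Proof. induction n; simpl; [lia|]. destruct (J n); lia. Qed.

Lemma card_pos n (J : nat -> bool) : (exists i, (i < n)%nat /\ J i = true) -> (0 < card n J)%nat.
Proof. induction n; simpl; intros [i [Hi Hj]]; [lia|]. destruct (Nat.eq_dec i n). subst; rewrite Hj; lia.
 assert (0 < card n J)%nat by (apply IHn; exists i; split; auto; lia). lia. Qed.

Lemma cs n (J : nat -> bool) (x : nat -> R) : (rsum n (fun i => if J i then Rabs (x i) else 0))^2 <=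
   INR (card n J) * rsum n (fun i => if J i then x i * x i else 0).
Proof. induction n; simpl. lra.
 set (A := rsum n (fun i => if J i then Rabs (x i) else 0)) in *.
 set (B := rsum n (fun i => if J i then x i * x i else 0)) in *.
 assert (HA: 0 <= A) by (apply rsum_nonneg; intros; destruct (J i); [apply Rabs_pos|lra]).
 assert (HB: 0 <= B) by (apply rsum_nonneg; intros; destruct (J i); [nra|lra]).
 rewrite plus_INR. assert (Hk := pos_INR (card n J)). set (k := INR (card n J)) in *.
 destruct (J n); simpl.
 - assert (Hb: Rabs (x n) * Rabs (x n) = x n * x n) by (rewrite <- Rabs_mult; apply Rabs_pos_eq; nra).
   assert (0 <= Rabs (x n)) by apply Rabs_pos. set (b := Rabs (x n)) in *. rewrite <- Hb.
   clearbody k A B b. simpl in IHn |- *.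
   destruct (Rlt_or_le 0 k) as [E|E].
   + assert (Eq: k*(B+k*b*b-2*A*b) - (A-k*b)^2 = k*B - A^2) by ring. assert (0 <= (A-k*b)^2) by (apply pow2_ge_0). assert (k * (B + k*b*b - 2*A*b) >= 0) by lra.
     assert (B + k*b*b - 2*A*b >= 0). { destruct (Rle_or_lt 0 (B + k*b*b - 2*A*b)); [lra|nra]. }
     nra.
   + assert (Hk0: k = 0) by lra. subst k. assert (HA0: A = 0) by nra. subst A. nra.
 - rewrite !Rplus_0_r. lra.
Qed.

Lemma amgm t th : 0 < t -> 0 < th <= 1 -> Rpower t th <= th * t + 1 - th.
Proof. intros Ht Hth. unfold Rpower. set (l := ln t). set (y := exp (th * l)).
 assert (Hy: 0 < y) by apply exp_pos.
 assert (E1: y * exp (- (th*l)) = 1) by (unfold y; rewrite <- exp_plus; replace (th*l + - (th*l)) with 0 by ring; apply exp_0).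
 assert (E2: y * exp ((1-th)*l) = t) by (unfold y; rewrite <- exp_plus; replace (th*l + (1-th)*l) with l by ring; apply exp_ln; auto).
 assert (I1 := exp_ineq1_le (- (th*l))). assert (I2 := exp_ineq1_le ((1-th)*l)).
 assert (1 >= y * (1 - th*l)) by (rewrite <- E1; apply Rle_ge; apply Rmult_le_compat_l; lra).
 assert (t >= y * (1 + (1-th)*l)) by (rewrite <- E2; apply Rle_ge; apply Rmult_le_compat_l; lra).
 nra. Qed.

Lemma exp_le x y : x <= y -> exp x <= exp y.
Proof. intros [H|H]. left; apply exp_increasing; auto. subst; lra. Qed.

Lemma rpow_pos x y : 0 < x -> rpow x y = Rpower x y.
Proof. intros; unfold rpow; destruct (Rlt_dec 0 x); [auto|lra]. Qed.

Lemma rpow_0 y : rpow 0 y = 0.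
Proof. unfold rpow; destruct (Rlt_dec 0 0); [lra|auto]. Qed.

Lemma rpow_nonneg x y : 0 <= rpow x y.
Proof. unfold rpow; destruct (Rlt_dec 0 x); [unfold Rpower; left; apply exp_pos|lra]. Qed.

Lemma Rpower_pos x y : 0 < Rpower x y.
Proof. unfold Rpower; apply exp_pos. Qed.

Lemma tail_term y M p : 0 <= y <= M -> 1 < p -> rpow y p <= rpow M (p-1) * y.
Proof. intros [H0 H1] Hp. destruct H0 as [H0|H0].
 - rewrite !rpow_pos by lra. replace p with ((p-1)+1) at 1 by ring. rewrite Rpower_plus, Rpower_1 by lra.
   apply Rmult_le_compat_r; [lra|]. apply Rle_Rpower_l; lra.
 - subst. rewrite rpow_0. rewrite Rmult_0_r; lra. Qed.

Lemma head_term y lam th : 0 < lam -> 0 < th <= 1 ->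
  rpow (Rabs y) (2*th) <= Rpower lam th * (th * (y*y) / lam + 1 - th).
Proof. intros Hl Hth. destruct (Req_dec y 0) as [E|E].
 - subst. rewrite Rabs_R0, rpow_0. apply Rmult_le_pos. left; apply Rpower_pos.
   replace (th * (0*0) / lam) with 0 by (field; lra). lra.
 - assert (Ha: 0 < Rabs y) by (apply Rabs_pos_lt; auto). rewrite rpow_pos by auto.
   assert (Hyy: y*y = Rpower (Rabs y) 2). { replace 2 with (INR 2) by (simpl; ring). rewrite Rpower_pow by auto. simpl. rewrite Rmult_1_r. rewrite <- Rabs_mult. rewrite Rabs_pos_eq; nra. }
   rewrite <- Rpower_mult. rewrite <- Hyy.
   assert (0 < y*y) by nra.
   replace (y*y) with (lam * (y*y/lam)) at 1 by (field; lra).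
   rewrite <- Rpower_mult_distr by (try apply Rdiv_lt_0_compat; lra).
   apply Rmult_le_compat_l. left; apply Rpower_pos.
   replace (th * (y*y) / lam) with (th * (y*y/lam)) by (field; lra).
   apply amgm; [apply Rdiv_lt_0_compat|]; lra.
Qed.

Lemma ln_le' x y : 0 < x -> x <= y -> ln x <= ln y.
Proof. intros H [E|E]. left; apply ln_increasing; auto. subst; lra. Qed.

Lemma final (s m D2 A L c p N kRE : R) :
 1 <= s -> 1 <= m <= 2*s -> 0 < D2 -> 0 < A -> 0 <= L -> 0<c<1 -> 1<p<=2 -> 0 <= kRE ->
 A^2 <= s*D2 -> L <= (1+c)/(1-c)*A ->
 1 <= m * Rpower (D2/m) (p/2) + rpow (L/s) (p-1) * L ->
 kRE * D2 <= (A+L)*N ->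
 Cconst c p * Rpower s (-(1/p)) * kRE <= N.
Proof.
 intros Hs Hm HD HA HL Hc Hp Hk H1 H2 H3 H4.
 set (a := (1+c)/(1-c)) in *. assert (Ha: 0 < a) by (unfold a; apply Rdiv_lt_0_compat; lra).
 set (th := p/2) in *.
 assert (Hth: 1/2 < th <= 1) by (unfold th; lra).
 assert (Hsd: 0 < s*D2) by nra.
 assert (HX1: m * Rpower (D2/m) th <= exp ((1-th)*(ln 2 + ln s) + th * ln D2)).
 { unfold Rpower. rewrite <- (exp_ln m) at 1 by lra. rewrite <- exp_plus. apply exp_le.
   unfold Rdiv. rewrite ln_mult, ln_Rinv by (try apply Rinv_0_lt_compat; lra).
   assert (ln m <= ln 2 + ln s) by (rewrite <- ln_mult by lra; apply ln_le'; lra).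
   nra. }
 assert (HAB: A <= sqrt (s*D2)). { rewrite <- (sqrt_pow2 A) by lra. apply sqrt_le_1_alt; auto. }
 assert (Hsq: 0 < sqrt (s*D2)) by (apply sqrt_lt_R0; auto).
 set (B := a * sqrt (s*D2)).
 assert (HB: 0 < B) by (unfold B; nra).
 assert (HLB: L <= B) by (unfold B; nra).
 assert (HX2: rpow (L/s) (p-1) * L <= exp (p * ln a + (1-th)*ln s + th * ln D2)).
 { destruct HL as [HL|HL].
   - rewrite rpow_pos by (apply Rdiv_lt_0_compat; lra).
     apply Rle_trans with (Rpower (B/s) (p-1) * B).
     { apply Rmult_le_compat; try lra. left; apply Rpower_pos. apply Rle_Rpower_l. lra.
       split. apply Rdiv_lt_0_compat; lra. unfold Rdiv; apply Rmult_le_compat_r; [left; apply Rinv_0_lt_compat; lra| lra]. }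
     unfold Rpower. rewrite <- (exp_ln B) at 2 by lra. rewrite <- exp_plus. right; f_equal.
     unfold Rdiv. rewrite ln_mult, ln_Rinv by (try apply Rinv_0_lt_compat; lra).
     unfold B. rewrite ln_mult by lra. rewrite <- Rpower_sqrt by lra. rewrite ln_Rpower.
     rewrite ln_mult by lra. unfold th. field.
   - subst L. rewrite Rmult_0_r. left; apply exp_pos. }
 set (E0 := exp ((1-th)*ln s + th * ln D2)).
 set (P2 := Rpower 2 (1-th)). set (Pa := Rpower a p).
 assert (HP2: 0 < P2) by apply Rpower_pos. assert (HPa: 0 < Pa) by apply Rpower_pos.
 assert (HU: 1 <= E0 * (P2 + Pa)).
 { replace (exp ((1-th)*(ln 2 + ln s) + th * ln D2)) with (E0 * P2) in HX1
     by (unfold E0, P2, Rpower; rewrite <- exp_plus; f_equal; ring).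
   replace (exp (p * ln a + (1-th)*ln s + th * ln D2)) with (E0 * Pa) in HX2
     by (unfold E0, Pa, Rpower; rewrite <- exp_plus; f_equal; ring). lra. }
 assert (HE0: 0 < E0) by apply exp_pos.
 assert (Hln: 0 <= (1-th)*ln s + th * ln D2 + ln (P2+Pa)).
 { rewrite <- ln_1. replace ((1-th)*ln s + th * ln D2) with (ln E0) by (unfold E0; apply ln_exp).
   rewrite <- ln_mult by lra. apply ln_le'; lra. }
 set (q := Rpower (p-1) (-(1/p))).
 assert (Hq: 1 <= q).
 { unfold q, Rpower. apply Rle_trans with (exp 0); [rewrite exp_0; lra|]. apply exp_le.
   assert (ln (p-1) <= 0) by (rewrite <- ln_1; apply ln_le'; lra).
   assert (0 < 1/p) by (apply Rdiv_lt_0_compat; lra).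
   replace (-(1/p)*ln(p-1)) with ((1/p)*(-ln(p-1))) by ring; apply Rmult_le_pos; lra. }
 assert (Hpow: 1 + Pa <= Rpower (1+a*q) p).
 { apply Rle_trans with (Rpower (1+a) p).
   - replace p with ((p-1)+1) by ring. rewrite Rpower_plus, Rpower_1 by lra.
     assert (1 <= Rpower (1+a) (p-1)).
     { unfold Rpower. apply Rle_trans with (exp 0); [rewrite exp_0; lra|]. apply exp_le.
       assert (0 <= ln (1+a)) by (rewrite <- ln_1; apply ln_le'; lra). nra. }
     assert (Rpower a (p-1) <= Rpower (1+a) (p-1)) by (apply Rle_Rpower_l; lra).
     unfold Pa. replace p with ((p-1)+1) at 1 by ring. rewrite Rpower_plus, Rpower_1 by lra. nra.
   - apply Rle_Rpower_l; try lra. nra. }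
 assert (HP2': Rpower 2 (th-1) * (P2+Pa) <= 1 + Pa).
 { assert (Rpower 2 (th-1) * P2 = 1) by (unfold P2, Rpower; rewrite <- exp_plus; replace ((th-1)*ln 2 + (1-th)*ln 2) with 0 by ring; apply exp_0).
   assert (Rpower 2 (th-1) <= 1).
   { unfold Rpower. apply Rle_trans with (exp 0); [|rewrite exp_0; lra]. apply exp_le. assert (/2 < ln 2) by apply ln_lt_2. nra. }
   nra. }
 assert (Haq: 0 < 1 + a*q) by nra.
 assert (Hkey: (th-1)*(ln 2 + ln s) - th * ln D2 <= p * ln (1+a*q)).
 { assert (ln (Rpower 2 (th-1) * (P2+Pa)) <= ln (Rpower (1+a*q) p)).
   { apply ln_le'. apply Rmult_lt_0_compat; [apply Rpower_pos|lra]. lra. }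
   rewrite ln_mult in H by (try apply Rpower_pos; lra). rewrite !ln_Rpower in H. lra. }
 set (G := Cconst c p * Rpower s (-(1/p))).
 assert (HG0: 0 <= G).
 { unfold G, Cconst. fold a. fold q. apply Rmult_le_pos; [|left; apply Rpower_pos].
   apply Rmult_le_pos. apply Rmult_le_pos; [left; apply Rpower_pos|lra]. left; apply Rinv_0_lt_compat; lra. }
 assert (HAL: A + L <= (1+a) * sqrt (s*D2)) by nra.
 assert (HG: G * ((1+a) * sqrt (s*D2)) <= D2).
 { assert (Ec: (1-c)*(1+a) = 2) by (unfold a; field; lra).
   assert (EG: G * ((1+a) * sqrt (s*D2)) = 2 * Rpower 2 (-(1/p) - 1/2) * Rpower s (-(1/p)) * sqrt (s*D2) / (1+a*q)).
   { unfold G, Cconst. fold a. fold q. rewrite <- Ec. field. lra. }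
   rewrite EG. apply Rle_trans with (D2 * (1+a*q) / (1+a*q)); [|right; field; lra].
   apply Rmult_le_compat_r. left; apply Rinv_0_lt_compat; lra.
   assert (EL: 2 * Rpower 2 (-(1/p) - 1/2) * Rpower s (-(1/p)) * sqrt (s*D2) = exp (ln 2 + (-(1/p)-1/2)*ln 2 + -(1/p)*ln s + /2*(ln s + ln D2))).
   { rewrite <- Rpower_sqrt by lra. unfold Rpower. rewrite ln_mult by lra. rewrite !exp_plus. rewrite exp_ln by lra. reflexivity. }
   assert (ER: D2 * (1+a*q) = exp (ln D2 + ln (1+a*q))) by (rewrite exp_plus, !exp_ln; lra).
   rewrite EL, ER. apply exp_le.
   assert (Hp0: 0 < p) by lra.
   assert (Eq: ln 2 + (- (1/p) - 1/2) * ln 2 + - (1/p) * ln s + / 2 * (ln s + ln D2) - (ln D2 + ln (1+a*q))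
              = ((th-1)*(ln 2 + ln s) - th * ln D2 - p * ln (1+a*q)) / p) by (unfold th; field; lra).
   assert (((th-1)*(ln 2 + ln s) - th * ln D2 - p * ln (1+a*q)) / p <= 0).
   { assert (0 < /p) by (apply Rinv_0_lt_compat; lra). unfold Rdiv. nra. }
   lra. }
 assert (HGA: G * (A+L) <= D2).
 { apply Rle_trans with (G * ((1+a) * sqrt (s*D2))); [apply Rmult_le_compat_l; lra| exact HG]. }
 assert (HALp: 0 < A + L) by lra.
 apply Rmult_le_reg_r with (A+L); [lra|].
 assert (G * kRE * (A+L) = kRE * (G * (A+L))) by ring.
 assert (kRE * (G*(A+L)) <= kRE * D2) by (apply Rmult_le_compat_l; lra).
 nra.
Qed.

Lemma inf_exists (S : R -> Prop) : (exists x, S x) -> (forall x, S x -> 0 <= x) -> exists m, is_inf S m.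
Proof. intros [x0 Hx0] Hpos.
 destruct (completeness (fun y => S (-y))) as [l [Hub Hlub]].
 - exists 0. intros y Hy. apply Hpos in Hy. lra.
 - exists (-x0). rewrite Ropp_involutive; auto.
 - exists (-l). split.
   + intros x Hx. assert (-x <= l) by (apply Hub; rewrite Ropp_involutive; auto). lra.
   + intros b Hb. assert (l <= -b). { apply Hlub. intros y Hy. apply Hb in Hy. lra. } lra.
Qed.

Lemma rsum_pos_ex n f : 0 < rsum n f -> exists i, (i < n)%nat /\ f i <> 0.
Proof. induction n; simpl; intros H. lra.
 destruct (Req_dec (f n) 0) as [E|E].
 - rewrite E in H. destruct IHn as [i [Hi Hf]]. lra. exists i; split; auto; lia.
 - exists n; split; auto; lia. Qed.

Lemma norminf_ge n f i : (i < n)%nat -> Rabs (f i) <= norminf n f.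
Proof. induction n; simpl; intros Hi. lia. destruct (Nat.eq_dec i n). subst. apply Rmax_r.
 eapply Rle_trans; [apply IHn; lia| apply Rmax_l]. Qed.

Lemma norminf_nonneg n f : 0 <= norminf n f.
Proof. induction n; simpl. lra. eapply Rle_trans; [apply IHn|apply Rmax_l]. Qed.

Lemma card_zero n (J : nat -> bool) : (forall i, (i < n)%nat -> J i = false) -> card n J = 0%nat.
Proof. induction n; simpl; intros H; auto. rewrite IHn by (intros; apply H; lia). rewrite H by lia. auto. Qed.

Lemma restr_abs_mono (J1 J2 : nat -> bool) x i : (J1 i = true -> J2 i = true) -> Rabs (restr J1 x i) <= Rabs (restr J2 x i).
Proof. unfold restr; intros H. destruct (J1 i). rewrite H; auto; lra. rewrite Rabs_R0; apply Rabs_pos. Qed.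

Lemma restr_sq_mono (J1 J2 : nat -> bool) x i : (J1 i = true -> J2 i = true) -> restr J1 x i * restr J1 x i <= restr J2 x i * restr J2 x i.
Proof. unfold restr; intros H. destruct (J1 i). rewrite H; auto; lra. destruct (J2 i); nra. Qed.

Lemma main_x K Psi c s p J x kRE : 0<c<1 -> (1<=s)%nat -> (2*s<=K)%nat -> 1<p<=2 ->
  is_kappa_RE K Psi c (2*s) kRE -> (card K J <= s)%nat -> inCone K c J x -> normp K p x = 1 ->
  0 <= kRE -> Cconst c p * Rpower (INR s) (-(1/p)) * kRE <= norminf K (mulmv K Psi x).
Proof.
 intros Hc Hs HsK Hp HkRE HJ Hcone Hn Hk0.
 unfold inCone, norm1 in Hcone.
 set (L := rsum K (fun i => Rabs (restr (compl J) x i))) in *.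
 set (A := rsum K (fun i => Rabs (restr J x i))) in *.
 set (a := (1+c)/(1-c)) in *.
 assert (Ha: 0 < a) by (unfold a; apply Rdiv_lt_0_compat; lra).
 assert (HL0: 0 <= L) by (apply rsum_nonneg; intros; apply Rabs_pos).
 assert (HA0: 0 <= A) by (apply rsum_nonneg; intros; apply Rabs_pos).
 assert (HsR: 1 <= INR s) by (replace 1 with (INR 1) by reflexivity; apply le_INR; auto).
 set (S := rsum K (fun i => rpow (Rabs (x i)) p)).
 assert (HS: S = 1).
 { unfold normp in Hn. fold S in Hn. unfold rpow in Hn. destruct (Rlt_dec 0 S) as [HS|HS]; [|lra].
   assert (Hl: ln (Rpower S (1/p)) = 0) by (rewrite Hn; apply ln_1).
   rewrite ln_Rpower in Hl. assert (ln S = 0).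
   { assert (0 < 1/p) by (apply Rdiv_lt_0_compat; lra). nra. }
   apply ln_inv; auto; [lra|]. rewrite ln_1; auto. }
 assert (HAp: 0 < A).
 { destruct (Rle_or_lt A 0) as [HA|HA]; auto. exfalso.
   assert (Hz: forall i, (i < K)%nat -> Rabs (x i) = 0).
   { intros i Hi. apply Rle_antisym; [|apply Rabs_pos].
     destruct (J i) eqn:EJ.
     - replace (Rabs (x i)) with (Rabs (restr J x i)) by (unfold restr; rewrite EJ; auto).
       eapply Rle_trans; [apply (rsum_term K (fun i => Rabs (restr J x i))); auto; intros; apply Rabs_pos|]. fold A. lra.
     - replace (Rabs (x i)) with (Rabs (restr (compl J) x i)) by (unfold restr, compl; rewrite EJ; auto).
       eapply Rle_trans; [apply (rsum_term K (fun i => Rabs (restr (compl J) x i))); auto; intros; apply Rabs_pos|]. fold L. nra. }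
   assert (S = 0). { unfold S. rewrite (rsum_ext K _ (fun _ => 0)). clear; induction K; simpl; lra.
     intros i Hi. rewrite Hz by auto. apply rpow_0. }
   lra. }
 set (T' := fun i => if Rlt_dec L (INR s * Rabs (x i)) then negb (J i) else false).
 set (T := fun i => orb (J i) (T' i)).
 assert (HJT: forall i, J i = true -> T i = true) by (intros i H; unfold T; rewrite H; auto).
 assert (HTf: forall i, T i = false -> J i = false /\ INR s * Rabs (x i) <= L).
 { intros i H. unfold T, T' in H. destruct (J i); simpl in H; [discriminate|]. split; auto.
   destruct (Rlt_dec L (INR s * Rabs (x i))); [discriminate|lra]. }
 assert (HT'c: (card K T' <= s)%nat).
 { destruct HL0 as [HL0|HL0].
   - assert (HC: INR (card K T') * L <= INR s * L).
     { rewrite <- rsum_card. rewrite Rmult_comm, <- rsum_scal.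
       apply Rle_trans with (rsum K (fun i => INR s * Rabs (restr (compl J) x i))).
       + apply rsum_le. intros i Hi. unfold T', restr, compl. destruct (Rlt_dec L (INR s * Rabs (x i))); destruct (J i); simpl; try rewrite Rabs_R0; try lra.
         assert (0 <= Rabs (x i)) by apply Rabs_pos. nra.
       + rewrite rsum_scal. fold L. lra. }
     apply INR_le. nra.
   - rewrite card_zero; [lia|]. intros i Hi. unfold T'. destruct (Rlt_dec L (INR s * Rabs (x i))) as [Hl|]; auto.
     destruct (J i) eqn:EJ; auto. exfalso.
     assert (Rabs (restr (compl J) x i) <= L).
     { apply (rsum_term K (fun i => Rabs (restr (compl J) x i))); auto; intros; apply Rabs_pos. }
     unfold restr, compl in H. rewrite EJ in H. simpl in H. rewrite <- HL0 in Hl.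
     assert (0 <= Rabs (x i)) by apply Rabs_pos. nra. }
 assert (HTc: (card K T <= 2*s)%nat) by (pose proof (card_orb K J T'); unfold T; lia).
 set (D2 := norm2sq K (restr T x)).
 set (DJ := norm2sq K (restr J x)).
 assert (HDJ: DJ <= D2) by (apply rsum_le; intros; apply restr_sq_mono; auto).
 assert (HDJ0: 0 <= DJ) by (apply rsum_nonneg; intros; nra).
 assert (HCS: A^2 <= INR s * D2).
 { assert (E1: A = rsum K (fun i => if J i then Rabs (x i) else 0)).
   { apply rsum_ext; intros; unfold restr; destruct (J i); auto; apply Rabs_R0. }
   assert (E2: DJ = rsum K (fun i => if J i then x i * x i else 0)).
   { apply rsum_ext; intros; unfold restr; destruct (J i); auto; ring. }
   assert (H := cs K J x). rewrite <- E1, <- E2 in H.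
   assert (INR (card K J) <= INR s) by (apply le_INR; auto).
   assert (0 <= INR (card K J)) by apply pos_INR. nra. }
 assert (HD2: 0 < D2) by nra.
 assert (HT1: (1 <= card K T)%nat).
 { destruct (rsum_pos_ex _ _ HD2) as [i [Hi Hf]]. apply card_pos. exists i; split; auto.
   unfold restr in Hf. destruct (T i); auto. exfalso; apply Hf; ring. }
 set (m := INR (card K T)).
 assert (Hm: 1 <= m <= 2 * INR s).
 { unfold m. split. replace 1 with (INR 1) by reflexivity; apply le_INR; auto.
   replace (2 * INR s) with (INR (2*s)) by (rewrite mult_INR; reflexivity). apply le_INR; auto. }
 assert (HconeT: inCone K c T x).
 { unfold inCone, norm1. fold a. apply Rle_trans with L.
   - apply rsum_le; intros; apply restr_abs_mono. unfold compl. intros HH. destruct (T i) eqn:ET; [discriminate|].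
     destruct (HTf i ET) as [HJf _]. rewrite HJf; auto.
   - apply Rle_trans with (a*A); auto. apply Rmult_le_compat_l; [lra|]. apply rsum_le; intros; apply restr_abs_mono; auto. }
 assert (Hnz: exists i, (i < K)%nat /\ x i <> 0).
 { destruct (rsum_pos_ex _ _ HAp) as [i [Hi Hf]]. exists i; split; auto. intros E. apply Hf. unfold restr; rewrite E. destruct (J i); [apply Rabs_R0|apply Rabs_R0]. }
 set (N := norminf K (mulmv K Psi x)).
 assert (HquadN: Rabs (quad K Psi x) <= (A + L) * N).
 { unfold quad. eapply Rle_trans; [apply rsum_abs|].
   apply Rle_trans with (rsum K (fun i => N * (Rabs (restr J x i) + Rabs (restr (compl J) x i)))).
   - apply rsum_le. intros i Hi. rewrite Rabs_mult.
     assert (Rabs (x i) = Rabs (restr J x i) + Rabs (restr (compl J) x i)) by (unfold restr, compl; destruct (J i); simpl; rewrite Rabs_R0; ring).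
     assert (Rabs (mulmv K Psi x i) <= N) by (apply norminf_ge; auto).
     assert (0 <= Rabs (x i)) by apply Rabs_pos. nra.
   - rewrite rsum_scal, rsum_plus. fold A L. lra. }
 assert (HkD: kRE * D2 <= (A + L) * N).
 { destruct (inf_exists (kappa_RE_J_set K Psi c T)) as [m0 Hm0].
   - exists (Rabs (quad K Psi x) / D2). exists x. split; [exact HconeT|split; [exact Hnz| split; [change (D2 <> 0); intro; lra|reflexivity]]].
   - intros v [y [_ [_ [Hne Hv]]]]. subst v. apply Rmult_le_pos. apply Rabs_pos.
     assert (0 <= norm2sq K (restr T y)) by (apply rsum_nonneg; intros; nra).
     left; apply Rinv_0_lt_compat; lra.
   - destruct HkRE as [_ HkRE]. assert (kRE <= m0) by (eapply HkRE; eauto).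
     assert (m0 <= Rabs (quad K Psi x) / D2) by (apply (proj1 Hm0); exists x; split; [exact HconeT|split; [exact Hnz| split; [change (D2 <> 0); intro; lra|reflexivity]]]).
     assert (kRE * D2 <= Rabs (quad K Psi x)).
     { assert (kRE <= Rabs (quad K Psi x) / D2) by lra.
       apply Rmult_le_compat_r with (r := D2) in H1; [|lra]. unfold Rdiv in H1.
       rewrite Rmult_assoc, Rinv_l, Rmult_1_r in H1 by lra. auto. }
     lra. }
 set (th := p/2).
 assert (Hth: 0 < th <= 1) by (unfold th; lra).
 set (lam := D2 / m).
 assert (Hlam: 0 < lam) by (unfold lam; apply Rdiv_lt_0_compat; lra).
 assert (HST: rsum K (fun i => if T i then rpow (Rabs (x i)) p else 0) <= m * Rpower lam th).
 { apply Rle_trans with (rsum K (fun i => Rpower lam th * (th / lam * (restr T x i * restr T x i) + (1 - th) * (if T i then 1 else 0)))).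
   - apply rsum_le. intros i Hi. unfold restr. destruct (T i).
     + replace p with (2*th) at 1 by (unfold th; field). eapply Rle_trans; [apply (head_term _ lam th); auto|]. right; field; lra.
     + assert (0 < Rpower lam th) by apply Rpower_pos. replace (th / lam * (0 * 0) + (1 - th) * 0) with 0 by ring. lra.
   - rewrite rsum_scal, rsum_plus, rsum_scal, rsum_scal, rsum_card. fold D2 m. right.
     change (rsum K (fun i : nat => restr T x i * restr T x i)) with D2. unfold lam. field. lra. }
 assert (HSTc: rsum K (fun i => if T i then 0 else rpow (Rabs (x i)) p) <= rpow (L / INR s) (p-1) * L).
 { apply Rle_trans with (rsum K (fun i => rpow (L / INR s) (p-1) * Rabs (restr (compl J) x i))).
   - apply rsum_le. intros i Hi. destruct (T i) eqn:ET.
     + apply Rmult_le_pos; [apply rpow_nonneg|apply Rabs_pos].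
     + destruct (HTf i ET) as [HJf Hle]. unfold restr, compl. rewrite HJf. simpl.
       apply tail_term; [|lra]. split. apply Rabs_pos.
       apply Rmult_le_reg_l with (INR s); [lra|]. unfold Rdiv. rewrite <- Rmult_assoc, (Rmult_comm (INR s) L), Rmult_assoc, Rinv_r, Rmult_1_r by lra. auto.
   - rewrite rsum_scal. fold L. lra. }
 assert (HSsplit: S = rsum K (fun i => if T i then rpow (Rabs (x i)) p else 0) + rsum K (fun i => if T i then 0 else rpow (Rabs (x i)) p)).
 { unfold S. rewrite <- rsum_plus. apply rsum_ext. intros; destruct (T i); ring. }
 apply (final (INR s) m D2 A L c p N kRE); auto.
 all: try (fold a; lra).
 all: fold th lam; try lra.

Qed.

Theorem proposition5 (K : nat) (Psi : nat -> nat -> R) (c : R) :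
  0 < c < 1 ->
  forall (s : nat) (p : R), (1 <= s)%nat -> (2 * s <= K)%nat -> 1 < p <= 2 ->
  forall kRE : R, is_kappa_RE K Psi c (2 * s) kRE ->
  forall J : nat -> bool, (card K J <= s)%nat ->
  forall kp : R, is_inf (kappa_p_set K Psi c p J) kp ->
  kp >= Cconst c p * Rpower (INR s) (- (1 / p)) * kRE.
Proof.
  intros Hc s p Hs1 Hs2 Hp kRE HkRE J HJ kp Hkp.
  assert (Hk0: 0 <= kRE).
  { destruct HkRE as [[J0 [_ [_ Hinf]]] _]. apply Hinf. intros v [y [_ [_ [Hnz Hv]]]]. subst v.
    apply Rmult_le_pos. apply Rabs_pos.
    assert (0 <= norm2sq K (restr J0 y)) by (apply rsum_nonneg; intros; nra).
    left; apply Rinv_0_lt_compat. lra. }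
  apply Rle_ge. apply (proj2 Hkp). intros v [x [Hcone [Hn Hv]]]. subst v.
  apply (main_x K Psi c s p J x kRE); auto.
Qed.
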